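(* Let $X,Y$ be MT-spaces, $\Gamma$ a standard ring, and let $f,g:X\to Y$ be MT-homotopic MT-maps. Then $f^*$ and $g^*$ induce the same homomorphism $H^*_{MT}(Y,\Gamma)\to H^*_{MT}(X,\Gamma)$ in measurable singular cohomology.
   Context: An MT-space is a set with a $\sigma$-algebra and a topology; MT-maps are measurable continuous maps; $X\times\mathbb{R}$ has the product topology and the product $\sigma$-algebra, and an MT-homotopy is an MT-map $H:X\times\mathbb{R}\to Y$ with $H(\cdot,0)=f$, $H(\cdot,1)=g$. A standard ring is a ring which is a standard Borel space with measurable operations. A measurable singular $n$-simplex is an MT-map $\sigma:\triangle^n\times T\to X$, $T$ a standard Borel space, $\triangle^n\times T$ with the product of the Euclidean and discrete topologies and the product $\sigma$-algebra. A singular $n$-cochain $\omega$ with coefficients in $\Gamma$ is measurable if for every measurable singular $n$-simplex $\sigma$ the map $t\mapsto\omega(\sigma|_{\triangle^n\times\{t\}})$ is measurable. Measurable cochains form a subcomplex of singular cochains, whose cohomology is $H^*_{MT}(X,\Gamma)$. *)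

(* Defs.v *)
From HB Require Import structures.
From mathcomp Require Import all_boot all_order all_algebra.
From mathcomp Require Import boolp classical_sets cardinality reals Rstruct.
From mathcomp Require Import measurable_structure.

Set Implicit Arguments.
Unset Strict Implicit.
Unset Printing Implicit Defensive.

Import Order.TTheory GRing.Theory Num.Theory.
Local Open Scope classical_set_scope.
Local Open Scope ring_scope.

Notation R := Rdefinitions.R.

Definition is_topology (T : Type) (O : set (set T)) : Prop :=
  [/\ O setT, O set0,
      (forall A B, O A -> O B -> O (A `&` B)) &
      (forall G : set (set T), G `<=` O -> O (\bigcup_(A in G) A))].

Definition gen_sigma (T : Type) (G : set (set T)) : set (set T) :=
  smallest (sigma_algebra setT) G.

Definition prod_sigma (A B : Type) (SA : set (set A)) (SB : set (set B))
  : set (set (A * B)) :=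
  gen_sigma [set E | exists U V, [/\ SA U, SB V & E = U `*` V]].

Definition prod_top (A B : Type) (OA : set (set A)) (OB : set (set B))
  : set (set (A * B)) :=
  [set E | forall z, E z -> exists U V,
     [/\ OA U, OB V, U z.1, V z.2 & U `*` V `<=` E]].

Definition discrete_top (T : Type) : set (set T) := setT.

Definition measurable_map (A B : Type) (SA : set (set A)) (SB : set (set B))
  (f : A -> B) : Prop := forall E, SB E -> SA (f @^-1` E).

Definition continuous_map (A B : Type) (OA : set (set A)) (OB : set (set B))
  (f : A -> B) : Prop := forall U, OB U -> OA (f @^-1` U).

Record MTSpace := MkMTSpace {
  mt_car :> Type;
  mt_meas : set (set mt_car);
  mt_open : set (set mt_car);
  mt_meas_sigma : sigma_algebra setT mt_meas;
  mt_open_top : is_topology mt_open }.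
Arguments mt_meas : clear implicits.
Arguments mt_open : clear implicits.

Definition MTmap (X Y : MTSpace) (f : X -> Y) : Prop :=
  measurable_map (mt_meas X) (mt_meas Y) f /\
  continuous_map (mt_open X) (mt_open Y) f.

Definition R_open : set (set R) :=
  [set U | forall x, U x -> exists e : R, 0 < e /\
      forall y, `|y - x| < e -> U y].
Definition R_borel : set (set R) := gen_sigma R_open.

Definition MThomotopy (X Y : MTSpace) (f g : X -> Y) (H : X * R -> Y) : Prop :=
  [/\ measurable_map (prod_sigma (mt_meas X) R_borel) (mt_meas Y) H,
      continuous_map (prod_top (mt_open X) R_open) (mt_open Y) H,
      (forall x, H (x, 0) = f x) &
      (forall x, H (x, 1) = g x)].

Definition MThomotopic (X Y : MTSpace) (f g : X -> Y) : Prop :=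
  exists H, MThomotopy f g H.

Definition is_metric (T : Type) (d : T -> T -> R) : Prop :=
  forall x y z, [/\ 0 <= d x y, d x y = 0 <-> x = y, d x y = d y x &
                   d x z <= d x y + d y z].

Definition metric_open (T : Type) (d : T -> T -> R) : set (set T) :=
  [set U | forall x, U x -> exists e : R, 0 < e /\ forall y, d x y < e -> U y].

Definition metric_complete (T : Type) (d : T -> T -> R) : Prop :=
  forall u : nat -> T,
    (forall e : R, 0 < e -> exists N, forall m k, (N <= m)%N -> (N <= k)%N ->
        d (u m) (u k) < e) ->
    exists l, forall e : R, 0 < e -> exists N, forall m, (N <= m)%N ->
        d (u m) l < e.

Definition separable_top (T : Type) (O : set (set T)) : Prop :=
  exists D : set T, countable D /\
    forall U, O U -> U !=set0 -> exists x, D x /\ U x.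

Definition polish (T : Type) (O : set (set T)) : Prop :=
  separable_top O /\
  exists d : T -> T -> R, [/\ is_metric d, metric_complete d & O = metric_open d].

Definition standard_borel (T : Type) (S : set (set T)) : Prop :=
  exists O : set (set T), polish O /\ S = gen_sigma O.

Definition standard_ring (G : pzRingType) (SG : set (set G)) : Prop :=
  [/\ standard_borel SG,
      measurable_map (prod_sigma SG SG) SG (fun z : G * G => z.1 + z.2),
      measurable_map (prod_sigma SG SG) SG (fun z : G * G => z.1 * z.2) &
      measurable_map SG SG (fun x : G => - x)].

Definition in_simplex (n : nat) (x : 'rV[R]_n.+1) : bool :=
  [forall i, 0 <= x 0 i] && (\sum_i x 0 i == 1).

Definition simplex (n : nat) := {x : 'rV[R]_n.+1 | in_simplex x}.

Definition simplex_open (n : nat) : set (set (simplex n)) :=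
  [set U : set (simplex n) | forall x : simplex n, U x -> exists e : R, 0 < e /\
     forall y : simplex n, (forall i, `|proj1_sig y 0 i - proj1_sig x 0 i| < e) -> U y].
Definition simplex_borel (n : nat) : set (set (simplex n)) :=
  gen_sigma (@simplex_open n).

(** i-th face: insert a 0 coordinate at position i *)
Definition face_vec (n : nat) (i : 'I_n.+2) (v : 'rV[R]_n.+1) : 'rV[R]_n.+2 :=
  \row_j (if unlift i j is Some k then v 0 k else 0).

Lemma face_vec_in (n : nat) (i : 'I_n.+2) (v : 'rV[R]_n.+1) :
  in_simplex v -> in_simplex (face_vec i v).
Proof.
move=> /andP[/forallP H0 /eqP H1]; apply/andP; split.
  apply/forallP => j; rewrite mxE; case: unliftP => [k _|_] //.
rewrite (bigD1_ord i) //= mxE unlift_none add0r.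
under eq_bigr => k _ do rewrite mxE liftK.
by rewrite H1.
Qed.

Definition face (n : nat) (i : 'I_n.+2) (x : simplex n) : simplex n.+1 :=
  exist _ (face_vec i (proj1_sig x)) (face_vec_in i (proj2_sig x)).

(** A singular n-cochain is determined by its values on singular n-simplices,
    i.e. continuous maps simplex n -> X.  We represent it by a function on all
    maps simplex n -> X; only its values on continuous maps are relevant
    (all conditions below only inspect continuous maps). *)
Definition cochain (X : MTSpace) (G : Type) (n : nat) :=
  (simplex n -> X) -> G.

Definition sing_simplex (X : MTSpace) (n : nat) (s : simplex n -> X) : Prop :=
  continuous_map (@simplex_open n) (mt_open X) s.

Definition coboundary (X : MTSpace) (G : pzRingType) (n : nat)
  (w : cochain X G n) : cochain X G n.+1 :=
  fun s => \sum_(i < n.+2) (-1) ^+ i * w (s \o face i).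

Definition cocycle (X : MTSpace) (G : pzRingType) (n : nat)
  (w : cochain X G n) : Prop :=
  forall s : simplex n.+1 -> X, sing_simplex s -> coboundary w s = 0.

Definition pullback (X Y : MTSpace) (G : Type) (n : nat) (f : X -> Y)
  (w : cochain Y G n) : cochain X G n :=
  fun s => w (f \o s).

Definition measurable_sing_simplex (X : MTSpace) (n : nat) (T : Type)
  (ST : set (set T)) (s : simplex n * T -> X) : Prop :=
  measurable_map (prod_sigma (@simplex_borel n) ST) (mt_meas X) s /\
  continuous_map (prod_top (@simplex_open n) (@discrete_top T)) (mt_open X) s.

Definition measurable_cochain (X : MTSpace) (G : Type) (SG : set (set G))
  (n : nat) (w : cochain X G n) : Prop :=
  forall (T : Type) (ST : set (set T)), standard_borel ST ->
  forall s : simplex n * T -> X, measurable_sing_simplex ST s ->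
    measurable_map ST SG (fun t => w (fun x => s (x, t))).

(** Two n-cochains a, b (on continuous simplices) represent the same class in
    H^n_MT(X, G): a - b is the coboundary of a measurable (n-1)-cochain
    (for n = 0: a = b, since there are no (-1)-cochains). *)
Definition MT_cohomologous (X : MTSpace) (G : pzRingType) (SG : set (set G))
  (n : nat) : cochain X G n -> cochain X G n -> Prop :=
  match n return cochain X G n -> cochain X G n -> Prop with
  | 0 => fun a b => forall s : simplex 0 -> X, sing_simplex s -> a s = b s
  | k.+1 => fun a b => exists eta : cochain X G k,
      measurable_cochain SG eta /\
      forall s : simplex k.+1 -> X, sing_simplex s ->
        a s - b s = coboundary eta s
  end.

(* Main.v *)
Require Import Defs.
From HB Require Import structures.
From mathcomp Require Import all_boot all_order all_algebra.
From mathcomp Require Import boolp classical_sets cardinality reals Rstruct.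
From mathcomp Require Import measurable_structure.
From mathcomp Require Import zify ring lra.
Set Implicit Arguments.
Unset Strict Implicit.
Unset Printing Implicit Defensive.
Import Order.TTheory GRing.Theory Num.Theory.
Local Open Scope classical_set_scope.
Local Open Scope ring_scope.

Definition face_nat (m : nat) (g : nat -> R) (l : nat) : R :=
  if (l < m)%N then g l else if l == m then 0 else g l.-1.
Definition pi_nat (i : nat) (g : nat -> R) (j : nat) : R :=
  if (j < i)%N then g j else if j == i then g j + g j.+1 else g j.+1.

Ltac natcase :=
  repeat (case: ifP => [?|/negbT ?]);
  try (exfalso; lia);
  rewrite ?add0r ?addr0;
  try (congr (_ _); lia);
  try (congr (_ + _); congr (_ _); lia).

Lemma pf_a g m j : (m <= j)%N ->
  pi_nat j.+1 (face_nat m g) =1 face_nat m (pi_nat j g).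
Proof. move=> hm x; rewrite /pi_nat /face_nat; natcase. Qed.
Lemma pf_b g i l : (i < l)%N ->
  pi_nat i (face_nat l.+1 g) =1 face_nat l (pi_nat i g).
Proof. move=> hm x; rewrite /pi_nat /face_nat; natcase. Qed.
Lemma pf_c g i :
  pi_nat i.+1 (face_nat i.+1 g) =1 pi_nat i (face_nat i.+1 g).
Proof. move=> x; rewrite /pi_nat /face_nat; natcase. Qed.
Lemma pf_0 g : pi_nat 0 (face_nat 0 g) =1 g.
Proof. move=> x; rewrite /pi_nat /face_nat; natcase. Qed.
Lemma pf_k g k : pi_nat k (face_nat k.+1 g) =1 g.
Proof. move=> x; rewrite /pi_nat /face_nat; natcase. Qed.

Definition gv (m : nat) (x : simplex m) (l : nat) : R :=
  if (l < m.+1)%N then proj1_sig x 0 (inord l) else 0.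
Definition Pn (g : nat -> R) (b : nat) : R := \sum_(l < b) g l.

Lemma gv_ord m (x : simplex m) (j : 'I_m.+1) : gv x j = proj1_sig x 0 j.
Proof. by rewrite /gv ltn_ord inord_val. Qed.
Lemma gv_out m (x : simplex m) l : (m.+1 <= l)%N -> gv x l = 0.
Proof. by move=> h; rewrite /gv ltnNge h. Qed.
Lemma gv_ge0 m (x : simplex m) l : 0 <= gv x l.
Proof.
rewrite /gv; case: ifP => // _; case: x => v /= /andP[/forallP h _]; exact: h.
Qed.
Lemma gv_sum m (x : simplex m) : Pn (gv x) m.+1 = 1.
Proof.
rewrite /Pn; under eq_bigr => j _ do rewrite gv_ord.
by case: x => v /= /andP[_ /eqP].
Qed.
Lemma gv_inj m (x y : simplex m) : (forall l, gv x l = gv y l) -> x = y.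
Proof.
move=> h; apply: val_inj; apply/matrixP => i j.
by rewrite ord1 -!gv_ord h.
Qed.

Lemma Pn0 g : Pn g 0 = 0.
Proof. by rewrite /Pn big_ord0. Qed.
Lemma PnS g b : Pn g b.+1 = Pn g b + g b.
Proof. by rewrite /Pn big_ord_recr. Qed.

Lemma Pn_face m g b : Pn (face_nat m g) b = if (b <= m)%N then Pn g b else Pn g b.-1.
Proof.
elim: b => [|b IH]; first by rewrite !Pn0.
rewrite PnS IH /face_nat; repeat (case: ifP => [?|/negbT ?]); try (exfalso; lia).
- by rewrite PnS.
- have -> : b = m by lia.
  by rewrite addr0.
- by rewrite /= -PnS prednK //; lia.
Qed.

Lemma Pn_pi i g b : Pn (pi_nat i g) b = if (b <= i)%N then Pn g b else Pn g b.+1.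
Proof.
elim: b => [|b IH]; first by rewrite !Pn0.
rewrite PnS IH /pi_nat; repeat (case: ifP => [?|/negbT ?]); try (exfalso; lia).
- by rewrite PnS.
- by rewrite !PnS addrA.
- by rewrite [RHS]PnS.
Qed.

Definition pirow m i (x : simplex m.+1) : 'rV[R]_m.+1 :=
  \row_(j < m.+1) pi_nat (minn i m) (gv x) j.

Lemma pirow_in m i (x : simplex m.+1) : in_simplex (pirow i x).
Proof.
apply/andP; split.
  apply/forallP => j; rewrite mxE /pi_nat.
  by case: ifP => _; [|case: ifP => _]; rewrite ?addr_ge0 ?gv_ge0.
apply/eqP; rewrite -(gv_sum x).
transitivity (Pn (pi_nat (minn i m) (gv x)) m.+1).
  by rewrite /Pn; apply: eq_bigr => j _; rewrite mxE.
rewrite Pn_pi; case: ifP => // h; exfalso; move: h; rewrite leqNgt ltnS geq_minr //.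
Qed.

Definition piS m i (x : simplex m.+1) : simplex m := exist _ (pirow i x) (pirow_in i x).

Lemma gv_pi m i (x : simplex m.+1) : gv (piS i x) = pi_nat (minn i m) (gv x).
Proof.
apply: funext => l; rewrite /gv /=; case: ifP => hl.
  by rewrite mxE inordK.
rewrite /pi_nat; case: ifP; first lia.
case: ifP; first lia.
move=> _ _; rewrite ifN //; lia.
Qed.

Definition tau m (i : nat) (x : simplex m) : R := 1 - Pn (gv x) i.+1.

Lemma gv_face n (i : 'I_n.+2) (x : simplex n) : gv (face i x) = face_nat i (gv x).
Proof.
apply: funext => l; rewrite {1}/gv /=.
case: ifP => hl.
  rewrite /face_vec mxE; case: unliftP => [[k0 hk0] hk|hk].
    have hl' : l = bump i k0 by rewrite -[l](@inordK n.+1) // hk.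
    rewrite -gv_ord /= /face_nat hl' /bump.
    case: (leqP i k0) => h /=.
      rewrite ifN ?ifN ?add0n //; first [apply/eqP; lia | rewrite -leqNgt; lia].
    by rewrite add0n h.
  have hl' : l = i by rewrite -[l](@inordK n.+1) // hk.
  by rewrite /face_nat hl' ltnn eqxx.
rewrite /face_nat ifN; last by have := ltn_ord i; lia.
rewrite ifN; last by apply/negP => /eqP E; have := ltn_ord i; lia.
by rewrite gv_out //; lia.
Qed.

Definition facen n (m : nat) : simplex n -> simplex n.+1 := face (inord m).
Lemma gv_facen n m (x : simplex n) : (m < n.+2)%N -> gv (facen m x) = face_nat m (gv x).
Proof. by move=> h; rewrite /facen gv_face inordK. Qed.

Lemma Q1 k m j (y : simplex k.+1) : (m <= j <= k)%N ->
  piS j.+1 (facen m y) = facen m (piS j y) /\ tau j.+1 (facen m y) = tau j y.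
Proof.
move=> /andP[h1 h2]; split.
  apply: gv_inj => l; rewrite gv_pi !gv_facen; try lia.
  rewrite gv_pi (minn_idPl h2) (minn_idPl _) ?ltnS //; exact: pf_a.
rewrite /tau gv_facen; last by lia.
by rewrite Pn_face ifN //; lia.
Qed.

Lemma Q2 k i l (y : simplex k.+1) : (i < l <= k.+1)%N ->
  piS i (facen l.+1 y) = facen l (piS i y) /\ tau i (facen l.+1 y) = tau i y.
Proof.
move=> /andP[h1 h2]; split.
  apply: gv_inj => x; rewrite gv_pi !gv_facen; try lia.
  rewrite gv_pi !(minn_idPl _) ?ltnS //; try lia; exact: pf_b.
rewrite /tau gv_facen; last by lia.
by rewrite Pn_face ifT //; lia.
Qed.

Lemma Q3 k i (y : simplex k.+1) : (i <= k)%N ->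
  piS i.+1 (facen i.+1 y) = piS i (facen i.+1 y) /\
  tau i.+1 (facen i.+1 y) = tau i (facen i.+1 y).
Proof.
move=> h; split.
  apply: gv_inj => x; rewrite !gv_pi !gv_facen; try lia.
  rewrite !(minn_idPl _) ?ltnS //; try lia; exact: pf_c.
rewrite /tau gv_facen; last by lia.
by rewrite !Pn_face ifN ?ifT //; lia.
Qed.

Lemma Q4 k (y : simplex k) :
  [/\ piS 0 (facen 0 y) = y, tau 0 (facen 0 y) = 1,
      piS k (facen k.+1 y) = y & tau k (facen k.+1 y) = 0].
Proof.
split.
- apply: gv_inj => x; rewrite gv_pi gv_facen // min0n; exact: pf_0.
- by rewrite /tau gv_facen // Pn_face /= Pn0 subr0.
- apply: gv_inj => x; rewrite gv_pi gv_facen // minnn; exact: pf_k.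
- by rewrite /tau gv_facen // Pn_face leqnn gv_sum subrr.
Qed.

Lemma sopen_inter m (A B : set (simplex m)) :
  simplex_open A -> simplex_open B -> simplex_open (A `&` B).
Proof.
move=> hA hB x [Ax Bx].
have [e1 [e10 h1]] := hA x Ax; have [e2 [e20 h2]] := hB x Bx.
exists (Num.min e1 e2); split; first by rewrite lt_min e10 e20.
move=> y hy; split; [apply: h1|apply: h2] => i;
  (apply: lt_le_trans (hy i) _; rewrite ge_min lexx ?orbT //).
Qed.

Lemma sopen_loc m (P : set (simplex m)) :
  (forall x, P x -> exists U, [/\ simplex_open U, U x & U `<=` P]) ->
  simplex_open P.
Proof.
move=> h x Px; have [U [oU Ux UP]] := h x Px.
have [e [e0 he]] := oU x Ux; exists e; split => // y hy; exact/UP/he.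
Qed.

Lemma gv_close m (x y : simplex m) d : 0 < d ->
  (forall i : 'I_m.+1, `|proj1_sig y 0 i - proj1_sig x 0 i| < d) ->
  forall l, `|gv y l - gv x l| < d.
Proof.
move=> d0 h l; rewrite /gv; case: ifP => hl; last by rewrite subrr normr0.
exact: h.
Qed.

Lemma norm_add2 (a b c e d : R) : `|a - c| < d -> `|b - e| < d ->
  `|(a + b) - (c + e)| < d + d.
Proof.
move=> h1 h2; rewrite opprD addrACA.
exact: le_lt_trans (ler_normD _ _) (ltrD h1 h2).
Qed.

Lemma cont_pi m i (U : set (simplex m)) :
  simplex_open U -> simplex_open (piS i @^-1` U).
Proof.
move=> hU x Ux; have [e [e0 he]] := hU _ Ux.
exists (e / 2); split; first lra.
move=> y hy; apply: he => j; rewrite -!gv_ord !gv_pi.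
have hc := gv_close (ltac:(lra) : 0 < e / 2) hy.
rewrite /pi_nat; case: ifP => _; last case: ifP => _.
- by apply: lt_trans (hc _) _; lra.
- by have := norm_add2 (hc j) (hc j.+1); have -> : e / 2 + e / 2 = e by lra.
- by apply: lt_trans (hc _) _; lra.
Qed.

Lemma Pn_close (g h : nat -> R) d b : (forall l, `|g l - h l| < d) ->
  `|Pn g b - Pn h b| <= b%:R * d.
Proof.
move=> hc; elim: b => [|b IH]; first by rewrite !Pn0 subrr normr0 mul0r.
rewrite !PnS opprD addrACA -addn1 natrD mulrDl mul1r.
exact: le_trans (ler_normD _ _) (lerD IH (ltW (hc b))).
Qed.

Lemma cont_tau m i (V : set R) :
  R_open V -> simplex_open (tau (m:=m) i @^-1` V).
Proof.
move=> hV x Vx; have [e [e0 he]] := hV _ Vx.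
have b0 : 0 < (i.+2)%:R :> R by rewrite ltr0n.
exists (e / (i.+2)%:R); split; first by rewrite divr_gt0.
move=> y hy; apply: he.
have hc := gv_close (divr_gt0 e0 b0) hy.
have -> : tau i y - tau i x = Pn (gv x) i.+1 - Pn (gv y) i.+1.
  by rewrite /tau; ring.
have hc' : forall l, `|gv x l - gv y l| < e / (i.+2)%:R.
  by move=> l; rewrite distrC.
apply: le_lt_trans (Pn_close i.+1 hc') _.
rewrite mulrA ltr_pdivrMr // mulrC ltr_pM2l // ltr_nat //.
Qed.

Lemma Gp_cont (X Y : MTSpace) (H : X * R -> Y) m (s : simplex m -> X) i :
  continuous_map (prod_top (mt_open X) R_open) (mt_open Y) H ->
  continuous_map (@simplex_open m) (mt_open X) s ->
  continuous_map (@simplex_open m.+1) (mt_open Y)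
     (fun y => H (s (piS i y), tau i y)).
Proof.
move=> hH hs V oV; apply: sopen_loc => x Px.
have [U1 [V1 [oU1 oV1 u1 v1 sub]]] := hH V oV _ Px.
exists (piS i @^-1` (s @^-1` U1) `&` tau i @^-1` V1); split.
- exact: sopen_inter (cont_pi (i:=i) (hs _ oU1)) (cont_tau (i:=i) oV1).
- by split.
- by move=> y [h1 h2]; apply: (sub (s (piS i y), tau i y)).
Qed.

Lemma GpT_cont (X Y : MTSpace) (H : X * R -> Y) m (T : Type)
  (s : simplex m * T -> X) i :
  continuous_map (prod_top (mt_open X) R_open) (mt_open Y) H ->
  continuous_map (prod_top (@simplex_open m) (@discrete_top T)) (mt_open X) s ->
  continuous_map (prod_top (@simplex_open m.+1) (@discrete_top T)) (mt_open Y)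
     (fun z => H (s (piS i z.1, z.2), tau i z.1)).
Proof.
move=> hH hs V oV [x t] Pz.
have [U1 [V1 [oU1 oV1 u1 v1 sub]]] := hH V oV _ Pz.
have [U2 [V2 [oU2 _ u2 v2 sub2]]] := hs _ oU1 (piS i x, t) u1.
exists (piS i @^-1` U2 `&` tau i @^-1` V1), V2; split => //.
- exact: sopen_inter (cont_pi (i:=i) oU2) (cont_tau (i:=i) oV1).
- move=> [y t'] [[h1 h2] h3] /=.
  apply: (sub (s (piS i y, t'), tau i y)); split => //.
  exact: (sub2 (piS i y, t')).
Qed.

Lemma sa_gen T (O : set (set T)) : sigma_algebra setT (gen_sigma O).
Proof. exact: smallest_sigma_algebra. Qed.

Lemma sa_setT T (S : set (set T)) : sigma_algebra setT S -> S setT.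
Proof. by case=> h0 hC _; have := hC _ h0; rewrite setD0. Qed.

Lemma sa_setI T (S : set (set T)) A B :
  sigma_algebra setT S -> S A -> S B -> S (A `&` B).
Proof.
case=> h0 hC hU hA hB.
have -> : A `&` B = setT `\` (\bigcup_n (fun n => if n is 0%N then setT `\` A else setT `\` B) n).
  apply/seteqP; split => x.
    by move=> [Ax Bx]; split => // -[[|n] _ /=] [].
  move=> [_ h]; split; apply: contrapT => nA; apply: h.
    by exists 0%N.
  by exists 1%N.
apply: (hC); apply: (hU) => -[|n] /=; exact: (hC).
Qed.

Lemma gen_meas A B (SA : set (set A)) (G' : set (set B)) (f : A -> B) :
  sigma_algebra setT SA -> (forall E, G' E -> SA (f @^-1` E)) ->
  measurable_map SA (gen_sigma G') f.
Proof.
move=> hSA hG E hE.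
have hM : sigma_algebra setT [set E | SA (f @^-1` E)].
  case: hSA => h0 hC hU; split => /=.
  - by rewrite preimage_set0.
  - by move=> E' h; exact: hC.
  - by move=> F h; rewrite preimage_bigcup; apply: hU.
exact: (smallest_sub hM hG) E hE.
Qed.

Lemma prod_meas A B C (S : set (set A)) (SB : set (set B)) (SC : set (set C))
  (a : A -> B) (b : A -> C) :
  sigma_algebra setT S -> measurable_map S SB a -> measurable_map S SC b ->
  measurable_map S (prod_sigma SB SC) (fun z => (a z, b z)).
Proof.
move=> hS ha hb; apply: gen_meas => // E [U [V [hU hV ->]]].
exact: sa_setI (ha _ hU) (hb _ hV).
Qed.

Lemma piT_meas m i T (ST : set (set T)) :
  measurable_map (prod_sigma (@simplex_borel m.+1) ST)
    (prod_sigma (@simplex_borel m) ST) (fun z => (piS i z.1, z.2)).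
Proof.
apply: gen_meas; first exact: sa_gen.
move=> E [U [V [hU hV ->]]]; apply: sub_sigma_algebra.
exists (piS i @^-1` U), V; split => //.
apply: gen_meas hU; first exact: sa_gen.
by move=> E' hE'; apply: sub_sigma_algebra; exact: cont_pi.
Qed.

Lemma tauT_meas m i T (ST : set (set T)) : sigma_algebra setT ST ->
  measurable_map (prod_sigma (@simplex_borel m) ST) R_borel
    (fun z => tau i z.1).
Proof.
move=> hST; apply: gen_meas; first exact: sa_gen.
move=> E hE; apply: sub_sigma_algebra.
exists (tau i @^-1` E), setT; split.
- by apply: sub_sigma_algebra; exact: cont_tau.
- exact: sa_setT.
- by apply/seteqP; split => z //= [].
Qed.

Lemma GpT_meas (X Y : MTSpace) (H : X * R -> Y) m (T : Type) (ST : set (set T))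
  (s : simplex m * T -> X) i : sigma_algebra setT ST ->
  measurable_map (prod_sigma (mt_meas X) R_borel) (mt_meas Y) H ->
  measurable_map (prod_sigma (@simplex_borel m) ST) (mt_meas X) s ->
  measurable_map (prod_sigma (@simplex_borel m.+1) ST) (mt_meas Y)
     (fun z => H (s (piS i z.1, z.2), tau i z.1)).
Proof.
move=> hST hH hs E hE.
have ha : measurable_map (prod_sigma (@simplex_borel m.+1) ST) (mt_meas X)
   (fun z => s (piS i z.1, z.2)).
  by move=> E' hE'; exact: (@piT_meas m i T ST _ (hs _ hE')).
exact: (prod_meas (sa_gen _) ha (tauT_meas i hST)) _ (hH E hE).
Qed.
Lemma sign_dbl (G : pzRingType) i : ((-1) ^+ (i + i) = 1 :> G).
Proof. by rewrite -signr_odd oddD addbb expr0. Qed.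
Lemma prism_alg (G : pzRingType) (k : nat) (A B : nat -> nat -> G) (ga fa : G) :
  (forall j m, (m <= j <= k)%N -> A j.+1 m = B j m) ->
  (forall i l, (i < l <= k.+1)%N -> A i l.+1 = B i l) ->
  (forall i, (i <= k)%N -> A i.+1 i.+1 = A i i.+1) ->
  A 0%N 0%N = ga -> A k.+1 k.+2 = fa ->
  (forall i, (i <= k.+1)%N -> \sum_(m < k.+3) (-1)^+m * A i m = 0) ->
  fa - ga = \sum_(l < k.+2) (-1)^+l * - (\sum_(j < k.+1) (-1)^+j * B j l).
Proof.
move=> h1 h2 h3 h4 h5 hc.
set D := fun i => A i.-1 i.
have E : \sum_(0 <= i < k.+2) (-1)^+i * \sum_(0 <= m < k.+3) (-1)^+m * A i m = 0.
  rewrite big_mkord big1 // => i _; rewrite big_mkord hc ?mulr0 //.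
  by have := ltn_ord i; lia.
have E2 : forall i, (i <= k.+1)%N ->
  (-1)^+i * \sum_(0 <= m < k.+3) (-1)^+m * A i m =
  (-1)^+i * \sum_(0 <= m < i) (-1)^+m * A i m + (D i - D i.+1) +
  (-1)^+i * \sum_(i.+2 <= m < k.+3) (-1)^+m * A i m.
  move=> i hi.
  rewrite (big_cat_nat _ (n:=i)) //=; last by lia.
  rewrite (@big_ltn _ _ _ i k.+3); last by lia.
  rewrite (@big_ltn _ _ _ i.+1 k.+3); last by lia.
  have -> : A i i = D i.
    case: i hi => [|i] hi; first by [].
    by rewrite /D /= h3 //; try lia.
  rewrite /D /= !mulrDr !mulrA -!exprD sign_dbl addnS exprS sign_dbl.
  rewrite mulr1 mulN1r !mul1r !addrA; congr (_ + _); rewrite addrA.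
have EL : \sum_(0 <= i < k.+2) (-1)^+i * \sum_(0 <= m < i) (-1)^+m * A i m =
   \sum_(0 <= j < k.+1) (-1)^+j.+1 * \sum_(0 <= l < j.+1) (-1)^+l * B j l.
  rewrite big_nat_recl // (@big_geq _ _ _ 0 0) // mulr0 add0r.
  apply: eq_big_nat => j hj; congr (_ * _); apply: eq_big_nat => l hl.
  by rewrite h1 //; lia.
have ER : \sum_(0 <= i < k.+2) (-1)^+i * \sum_(i.+2 <= m < k.+3) (-1)^+m * A i m =
   \sum_(0 <= j < k.+1) (-1)^+j * \sum_(j.+1 <= l < k.+2) (-1)^+l.+1 * B j l.
  rewrite big_nat_recr //= (@big_geq _ _ _ k.+3 k.+3) // mulr0 addr0.
  apply: eq_big_nat => j hj; congr (_ * _).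
  rewrite big_add1 /=; apply: eq_big_nat => l hl.
  by rewrite h2 //; lia.
have ED : \sum_(0 <= i < k.+2) (D i - D i.+1) = ga - fa.
  rewrite -[LHS]opprK -sumrN.
  under eq_bigr do rewrite opprB.
  by rewrite telescope_sumr // /D /= h4 h5 opprB.
have EC : forall j, (j < k.+1)%N ->
  (-1)^+j.+1 * \sum_(0 <= l < j.+1) (-1)^+l * B j l +
  (-1)^+j * \sum_(j.+1 <= l < k.+2) (-1)^+l.+1 * B j l =
  - \sum_(0 <= l < k.+2) (-1)^+j * ((-1)^+l * B j l).
  move=> j hj.
  rewrite [in RHS](@big_cat_nat _ _ _ j.+1) //=; last by lia.
  rewrite opprD !mulr_sumr -!sumrN; congr (_ + _); apply: eq_bigr => l _.
    by rewrite exprS mulN1r mulNr.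
  by rewrite exprS mulN1r mulNr mulrN.
move: E.
under eq_big_nat => i /andP[_ hi] do rewrite E2 //.
rewrite big_split /= big_split /= EL ER ED addrAC -big_split /=.
under eq_big_nat => j /andP[_ hj] do rewrite EC //.
rewrite sumrN => /eqP; rewrite addrC -subr_eq0 subr0 subr_eq0 => /eqP E.
rewrite -opprB E big_mkord exchange_big /= -sumrN big_mkord; apply: eq_bigr => l _.
rewrite mulrN mulr_sumr; congr (- _); apply: eq_bigr => j _.
by rewrite !mulrA -!exprD addnC.
Qed.

Section GMeas.
Variables (G : pzRingType) (SG : set (set G)) (T : Type) (ST : set (set T)).
Hypotheses (hG : standard_ring SG) (hST : sigma_algebra setT ST).

Lemma mG_add (a b : T -> G) : measurable_map ST SG a -> measurable_map ST SG b ->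
  measurable_map ST SG (fun t => a t + b t).
Proof.
case: hG => _ hadd _ _ ha hb E hE; exact: (prod_meas hST ha hb) _ (hadd E hE).
Qed.

Lemma mG_opp (a : T -> G) : measurable_map ST SG a ->
  measurable_map ST SG (fun t => - a t).
Proof. case: hG => _ _ _ hopp ha E hE; exact: ha _ (hopp E hE). Qed.

Lemma mG_cst (c : G) : measurable_map ST SG (fun _ => c).
Proof.
move=> E _; case: (pselect (E c)) => h.
  have -> : (fun _ : T => c) @^-1` E = setT by apply/seteqP; split.
  exact: sa_setT.
have -> : (fun _ : T => c) @^-1` E = set0 by apply/seteqP; split.
by case: hST.
Qed.

Lemma mG_sign j (a : T -> G) : measurable_map ST SG a ->
  measurable_map ST SG (fun t => (-1)^+j * a t).
Proof.
move=> ha.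
have -> : (fun t => (-1)^+j * a t) = (fun t => if odd j then - a t else a t).
  by apply: funext => t; rewrite -signr_odd mulr_sign.
by case: (odd j) => //; exact: mG_opp.
Qed.

Lemma mG_sum N (F : nat -> T -> G) : (forall j, measurable_map ST SG (F j)) ->
  measurable_map ST SG (fun t => \sum_(j < N) F j t).
Proof.
move=> hF; elim: N => [|N IH].
  have -> : (fun t => \sum_(j < 0) F j t) = (fun _ => 0).
    by apply: funext => t; rewrite big_ord0.
  exact: mG_cst.
have -> : (fun t => \sum_(j < N.+1) F j t) = (fun t => \sum_(j < N) F j t + F N t).
  by apply: funext => t; rewrite big_ord_recr.
exact: mG_add.
Qed.
End GMeas.

Lemma cob_facen (X : MTSpace) (G : pzRingType) n (w : cochain X G n) s :
  coboundary w s = \sum_(i < n.+2) (-1)^+i * w (s \o facen i).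
Proof. by apply: eq_bigr => i _; rewrite /facen inord_val. Qed.

Theorem mainTheorem12 (G : pzRingType) (SG : set (set G))
  (hG : standard_ring SG) (X Y : MTSpace) (f g : X -> Y)
  (hf : MTmap f) (hg : MTmap g) (hfg : MThomotopic f g)
  (n : nat) (w : cochain Y G n)
  (hw : measurable_cochain SG w) (hcoc : cocycle w) :
  MT_cohomologous SG (pullback f w) (pullback g w).
Proof.
have sgST : forall T (ST : set (set T)), standard_borel ST -> sigma_algebra setT ST.
  by move=> T ST [O [_ ->]]; exact: sa_gen.
case: hfg => H [hHm hHc hH0 hH1].
case: n w hw hcoc => [|k] w hw hcoc.
- move=> s hs /=.
  have hc := hcoc _ (Gp_cont (i:=0%N) hHc hs).
  rewrite cob_facen !big_ord_recr big_ord0 /= in hc.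
  have e0 : (fun y => H (s (piS 0 y), tau 0 y)) \o facen 0 = g \o s.
    apply: funext => y /=; have [-> -> _ _] := Q4 y; exact: hH1.
  have e1 : (fun y => H (s (piS 0 y), tau 0 y)) \o facen 1 = f \o s.
    apply: funext => y /=; have [_ _ -> ->] := Q4 y; exact: hH0.
  rewrite e0 e1 expr0 expr1 mul1r mulN1r add0r in hc; apply/eqP; rewrite eq_sym -subr_eq0; exact/eqP.
- exists (fun sg : simplex k -> X =>
     - \sum_(j < k.+1) (-1)^+j * w (fun y => H (sg (piS j y), tau j y))).
  split.
    move=> T ST hST s [hsm hsc].
    have hST' := sgST _ _ hST.
    refine (mG_opp hG (@mG_sum _ _ _ _ hG hST' k.+1
      (fun j t => (-1)^+j * w (fun x => H (s (piS j x, t), tau j x))) _)).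
    move=> j; apply: (mG_sign hG).
    exact: (hw T ST hST (fun z => H (s (piS j z.1, z.2), tau j z.1))
      (conj (@GpT_meas X Y H k T ST s j (sgST _ _ hST) hHm hsm) (@GpT_cont X Y H k T s j hHc hsc))).
  move=> s hs; rewrite cob_facen /pullback.
  apply: (prism_alg
    (A := fun i m => w ((fun y => H (s (piS i y), tau i y)) \o facen m))
    (B := fun j l => w (fun y => H ((s \o facen l) (piS j y), tau j y)))).
  + move=> j m hjm; congr w; apply: funext => y /=.
    by have [-> ->] := Q1 y hjm.
  + move=> i l hil; congr w; apply: funext => y /=.
    by have [-> ->] := Q2 y hil.
  + move=> i hi; congr w; apply: funext => y /=.
    by have [-> ->] := Q3 y hi.
  + congr w; apply: funext => y /=; have [-> -> _ _] := Q4 y; exact: hH1.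
  + congr w; apply: funext => y /=; have [_ _ -> ->] := Q4 y; exact: hH0.
  + by move=> i hi; have := hcoc _ (Gp_cont (i:=i) hHc hs); rewrite cob_facen.
Qed.
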